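(* Let $R$ be a connected reduced order with universal grading $(\Gamma,(R_\gamma)_{\gamma\in\Gamma})$ and degree map $d\colon\mu\to\Gamma$. The map $\operatorname{Id}_0(d)\to\mathcal{D}(R)$ given by $f\mapsto\big(\bigoplus_{\gamma\in\ker(f)}R_\gamma,\ \operatorname{im}(f)\big)$ is well defined and is an isomorphism of partially ordered sets that respects the actions of $\operatorname{Aut}(R)$. Its inverse sends $(A,G)\in\mathcal{D}(R)$ to the homomorphism $f\colon\Gamma\to\mu$ determined as follows: $\Gamma=\Gamma_A\times d(G)$ where $\Gamma_A$ is the subgroup generated by $\{\gamma: R_\gamma\cap A\ne0\}$, $d$ restricts to an isomorphism $G\to d(G)$, and $f$ is trivial on $\Gamma_A$ and equals the inverse of this isomorphism on $d(G)$.
   Context: All rings have a unit element. An order is a commutative ring whose additive group is isomorphic to $\mathbb{Z}^n$; reduced means no non-zero nilpotents, connected means exactly two idempotents. $\mu=\mu(R)$ is the group of roots of unity. A grading of $R$ is a pair $(\Delta,(R_\delta)_\delta)$ with $\Delta$ an abelian group and $R_\delta$ additive subgroups such that $R_\gamma R_\delta\subset R_{\gamma\delta}$ and $\bigoplus_\delta R_\delta\to R$ is bijective; it is universal if every grading of $R$ is the pushforward $(E,(\sum_{\delta\in f^{-1}\epsilon}R_\delta)_\epsilon)$ along a unique homomorphism $f$ from its group. Every reduced order has a universal grading with finite group; for connected reduced $R$ every $\zeta\in\mu$ lies in $R_\gamma$ for a unique $\gamma$, and the degree map $d\colon\mu\to\Gamma$, $\zeta\mapsto\gamma$, is a homomorphism.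 $\operatorname{Id}_0(d)=\{f\in\operatorname{Hom}(\Gamma,\mu): f\circ d\circ f=f\}$, partially ordered by $f\leq g$ iff $f\circ d\circ g=g\circ d\circ f=f$. $\mathcal{D}(R)$ is the set of pairs $(A,G)$ with $A\subset R$ a subring and $G\subset R^*$ a subgroup such that the natural map from the group ring $A[G]$ to $R$ is an isomorphism, partially ordered by $(B,H)\leq(A,G)$ iff $H\subset G$ and $B\supset A$. $\operatorname{Aut}(R)$ acts on $\mathcal{D}(R)$ componentwise; each $\sigma\in\operatorname{Aut}(R)$ induces $\sigma_\Gamma\in\operatorname{Aut}(\Gamma)$ with $\sigma(R_\gamma)=R_{\sigma_\Gamma(\gamma)}$, and $\sigma$ acts on $\operatorname{Id}_0(d)$ by $f\mapsto\sigma|_\mu\circ f\circ\sigma_\Gamma^{-1}$. *)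

(* Defs.v *)
From mathcomp Require Import all_boot all_order all_algebra.
Set Implicit Arguments. Unset Strict Implicit. Unset Printing Implicit Defensive.
Import GRing.Theory.
Local Open Scope ring_scope.

(* Abelian groups Gamma, Delta are written additively as zmodTypes;
   subsets of R are predicates R -> Prop. *)

Section Defs.
Variable R : comNzRingType.

Definition mu (x : R) : Prop := exists n : nat, (0 < n)%N /\ x ^+ n = 1.

Definition is_order : Prop :=
  exists (n : nat) (phi : 'rV[int]_n -> R),
    (forall a b, phi (a - b) = phi a - phi b) /\ bijective phi.

Definition reduced : Prop := forall (x : R) (n : nat), x ^+ n = 0 -> x = 0.

Definition connected : Prop :=
  (0 : R) <> 1 /\ forall e : R, e * e = e -> e = 0 \/ e = 1.

Definition gsum (D : zmodType) (Sg : D -> R -> Prop) (P : D -> Prop) (x : R) : Prop :=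
  exists (s : seq D) (y : D -> R),
    (forall g, g \in s -> P g /\ Sg g (y g)) /\ x = \sum_(g <- s) y g.

Definition grading (D : zmodType) (Sg : D -> R -> Prop) : Prop :=
  [/\ (forall g, Sg g 0),
      (forall g x y, Sg g x -> Sg g y -> Sg g (x - y)),
      (forall g h x y, Sg g x -> Sg h y -> Sg (g + h) (x * y)),
      (forall x, gsum Sg (fun _ => True) x) &
      (forall (s : seq D) (y : D -> R), uniq s ->
         (forall g, g \in s -> Sg g (y g)) ->
         \sum_(g <- s) y g = 0 -> forall g, g \in s -> y g = 0)].

Definition additive_map (D E : zmodType) (f : D -> E) : Prop :=
  forall a b, f (a + b) = f a + f b.

Definition is_pushforward (D E : zmodType) (Sg : D -> R -> Prop) (f : D -> E)
  (Sf : E -> R -> Prop) : Prop :=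
  forall e x, Sf e x <-> gsum Sg (fun g => f g = e) x.

Definition universal_grading (G : zmodType) (Rg : G -> R -> Prop) : Prop :=
  grading Rg /\
  forall (E : zmodType) (Sg : E -> R -> Prop), grading Sg ->
    exists f : G -> E, [/\ additive_map f, is_pushforward Rg f Sg &
      (forall f' : G -> E, additive_map f' -> is_pushforward Rg f' Sg ->
        forall g, f' g = f g)].

Definition hom_mu (G : zmodType) (f : G -> R) : Prop :=
  (forall a b, f (a + b) = f a * f b) /\ (forall a, mu (f a)).

Definition Id0 (G : zmodType) (d : R -> G) (f : G -> R) : Prop :=
  hom_mu f /\ forall g, f (d (f g)) = f g.

Definition leId0 (G : zmodType) (d : R -> G) (f g : G -> R) : Prop :=
  forall c, f (d (g c)) = f c /\ g (d (f c)) = f c.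

Definition inD (A Gp : R -> Prop) : Prop :=
  [/\
      (A 1 /\ (forall x y, A x -> A y -> A (x - y)) /\
        (forall x y, A x -> A y -> A (x * y))),
      (Gp 1 /\ (forall x y, Gp x -> Gp y -> Gp (x * y)) /\
        (forall x, Gp x -> exists y, Gp y /\ x * y = 1)),
      (* A[G] -> R surjective *)
      (forall x, exists (s : seq R) (a : R -> R),
          (forall g, g \in s -> Gp g /\ A (a g)) /\ x = \sum_(g <- s) a g * g) &
      (* A[G] -> R injective *)
      (forall (s : seq R) (a : R -> R), uniq s ->
          (forall g, g \in s -> Gp g /\ A (a g)) ->
          \sum_(g <- s) a g * g = 0 -> forall g, g \in s -> a g = 0)].

Definition leD (B H A Gp : R -> Prop) : Prop :=
  (forall x, H x -> Gp x) /\ (forall x, A x -> B x).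

Definition Aof (G : zmodType) (Rg : G -> R -> Prop) (f : G -> R) : R -> Prop :=
  gsum Rg (fun g => f g = 1).
Definition Gof (G : zmodType) (f : G -> R) : R -> Prop :=
  fun x => exists g, f g = x.

Definition GammaA (G : zmodType) (Rg : G -> R -> Prop) (A : R -> Prop) (c : G) : Prop :=
  exists (s : seq G) (k : G -> int),
    (forall g, g \in s -> exists x, x <> 0 /\ Rg g x /\ A x) /\
    c = \sum_(g <- s) g *~ k g.

Definition same_set (P Q : R -> Prop) : Prop := forall x, P x <-> Q x.

End Defs.

(* Main.v *)
From HB Require Import structures.
Require Import Defs.
From mathcomp Require Import all_boot all_order all_algebra.
From Stdlib Require Import Classical ClassicalEpsilon FunctionalExtensionality PropExtensionality.
Import GRing.Theory.
Local Open Scope ring_scope.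
Set Implicit Arguments. Unset Strict Implicit. Unset Printing Implicit Defensive.


Lemma part_undup (I T : eqType) (V : zmodType) (r : seq I) (f : I -> T) (F : I -> V) :
  \sum_(z <- undup (map f r)) \sum_(p <- r | f p == z) F p = \sum_(p <- r) F p.
Proof.
under eq_bigr do rewrite big_mkcond.
rewrite exchange_big /= [RHS]big_seq_cond [LHS]big_seq_cond.
apply: eq_bigr => p /andP [pr _].
rewrite -big_mkcond -big_filter.
rewrite (perm_big [:: f p]) ?big_seq1 //.
apply: uniq_perm; first by rewrite filter_uniq ?undup_uniq.
  by [].
move=> z; rewrite mem_filter mem_undup inE eq_sym; case: eqP => //= ->.
by apply/mapP; exists p.

Qed.
Unset Implicit Arguments.


Section Grading.
Context {R : comNzRingType} {Gam : zmodType} {Rg : Gam -> R -> Prop}.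
Hypothesis Hg : grading Rg.

Lemma Rg0 g : Rg g 0. Proof. by case: Hg. Qed.
Lemma RgB {g x y} : Rg g x -> Rg g y -> Rg g (x - y). Proof. by case: Hg => _ H _ _ _; apply: H. Qed.
Lemma RgN {g x} : Rg g x -> Rg g (- x).
Proof. by move=> h; rewrite -sub0r; apply: RgB => //; apply: Rg0. Qed.
Lemma RgD {g x y} : Rg g x -> Rg g y -> Rg g (x + y).
Proof. by move=> hx hy; rewrite -[y]opprK; apply: RgB => //; apply: RgN. Qed.
Lemma RgM {g h x y} : Rg g x -> Rg h y -> Rg (g + h) (x * y).
Proof. by case: Hg => _ _ H _ _; apply: H. Qed.
Lemma Rg_sum e (I : Type) (r : seq I) (P : pred I) (F : I -> R) :
  (forall i, P i -> Rg e (F i)) -> Rg e (\sum_(i <- r | P i) F i).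
Proof.
move=> H; elim/big_ind: _ => //; [exact: Rg0| move=> a b; exact: RgD].
Qed.

Definition ext (s : seq Gam) (y : Gam -> R) g := if g \in s then y g else 0.

Lemma ext_sum {s u} y : uniq s -> uniq u -> {subset s <= u} ->
  \sum_(g <- u) ext s y g = \sum_(g <- s) y g.
Proof.
move=> us uu su; rewrite /ext -big_mkcond -big_filter; apply: perm_big.
apply: uniq_perm; first by rewrite filter_uniq.
  by [].
move=> z; rewrite mem_filter; case zs: (z \in s) => //=; exact: su.
Qed.

Lemma ext_Rg {s y} g : (forall g, g \in s -> Rg g (y g)) -> Rg g (ext s y g).
Proof. by move=> H; rewrite /ext; case: ifP => [/H|_] //; apply: Rg0. Qed.

Definition decomp x s y :=
  uniq s /\ (forall g, g \in s -> Rg g (y g)) /\ x = \sum_(g <- s) y g.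

Lemma decomp_ex x : exists p : seq Gam * (Gam -> R), decomp x p.1 p.2.
Proof.
case: Hg => _ _ _ H _; case: (H x) => s [y [Hy ->]].
exists (undup s, fun g => \sum_(h <- s | h == g) y h); split => /=.
  exact: undup_uniq.
split; last by have := part_undup s id y; rewrite map_id.
move=> g _; rewrite big_seq_cond; apply: Rg_sum => h /andP [hs /eqP <-].
by case: (Hy h hs).
Qed.

Lemma decomp_uniq {x s y t z} : decomp x s y -> decomp x t z ->
  forall g, ext s y g = ext t z g.
Proof.
move=> [us [Rs xs]] [ut [Rt xt]] g.
case: Hg => _ _ _ _ H.
set u := undup (s ++ t).
have := H u (fun g => ext s y g - ext t z g) (undup_uniq _).
have sub1 : {subset s <= u} by move=> w; rewrite mem_undup mem_cat => ->.
have sub2 : {subset t <= u} by move=> w; rewrite mem_undup mem_cat => ->; rewrite orbT.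
move=> /(_ _ _ g) H'.
case gu: (g \in u).
  apply/eqP; rewrite -subr_eq0; apply/eqP; apply: H' => //.
    by move=> h _; apply: RgB; apply: ext_Rg.
  rewrite sumrB (ext_sum y us) ?undup_uniq // (ext_sum z ut) ?undup_uniq //.
  by transitivity (x - x); [congr (_ - _) | rewrite subrr].
move: gu; rewrite mem_undup mem_cat => /negbT; rewrite negb_or => /andP [gs gt].
by rewrite /ext (negbTE gs) (negbTE gt).
Qed.

Definition dec x := proj1_sig (constructive_indefinite_description _ (decomp_ex x)).
Lemma dec_spec x : decomp x (dec x).1 (dec x).2.
Proof. exact: proj2_sig (constructive_indefinite_description _ (decomp_ex x)). Qed.

Definition gpi (c : Gam) (x : R) : R := ext (dec x).1 (dec x).2 c.

Lemma pi_spec {x s y} c : decomp x s y -> gpi c x = ext s y c.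
Proof. by move=> h; exact: (decomp_uniq (dec_spec x) h c). Qed.

Lemma pi_hom {e x} c : Rg e x -> gpi c x = if c == e then x else 0.
Proof.
move=> h; rewrite (@pi_spec _ [:: e] (fun _ => x)) /ext ?inE //.
by split => //; split; [move=> g; rewrite inE => /eqP ->| rewrite big_seq1].
Qed.

Lemma pi_in c x : Rg c (gpi c x).
Proof. by apply: ext_Rg; case: (dec_spec x) => _ []. Qed.

Lemma pi_expand x : exists s, uniq s /\ x = \sum_(g <- s) gpi g x.
Proof.
case: (dec_spec x) => us [Rs xs]; exists (dec x).1; split => //.
rewrite [LHS]xs big_seq [RHS]big_seq; apply: eq_bigr => g gs.
by rewrite /gpi /ext gs.
Qed.

Lemma piD c x y : gpi c (x + y) = gpi c x + gpi c y.
Proof.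
case: (dec_spec x) => us [Rs xs]; case: (dec_spec y) => ut [Rt yt].
set s := (dec x).1; set a := (dec x).2; set t := (dec y).1; set b := (dec y).2.
set u := undup (s ++ t).
have sub1 : {subset s <= u} by move=> w; rewrite mem_undup mem_cat => ->.
have sub2 : {subset t <= u} by move=> w; rewrite mem_undup mem_cat => ->; rewrite orbT.
rewrite (@pi_spec _ u (fun g => ext s a g + ext t b g)).
  rewrite /gpi -/s -/a -/t -/b /ext; case: ifP => //.
  rewrite mem_undup mem_cat => /negbT; rewrite negb_or => /andP [/negbTE -> /negbTE ->].
  by rewrite addr0.
split; first exact: undup_uniq.
split; first by move=> g _; apply: RgD; apply: ext_Rg.
rewrite big_split /= (ext_sum _ us) ?undup_uniq // (ext_sum _ ut) ?undup_uniq //.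
by congr (_ + _); [exact: xs| exact: yt].
Qed.

Lemma pi0 c : gpi c 0 = 0.
Proof. by rewrite (pi_hom c (Rg0 c)) eqxx. Qed.

Lemma piN c x : gpi c (- x) = - gpi c x.
Proof. by apply/eqP; rewrite -addr_eq0 -piD addNr pi0. Qed.

Lemma piB c x y : gpi c (x - y) = gpi c x - gpi c y.
Proof. by rewrite piD piN. Qed.

Lemma pi_sum c (I : Type) (r : seq I) (P : pred I) (F : I -> R) :
  gpi c (\sum_(i <- r | P i) F i) = \sum_(i <- r | P i) gpi c (F i).
Proof. by apply: (big_morph (gpi c)); [exact: piD| exact: pi0]. Qed.

Lemma pi_eq0 x : (forall c, gpi c x = 0) -> x = 0.
Proof.
move=> H; case: (pi_expand x) => s [_ ->]; by apply: big1 => g _.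
Qed.

Lemma gsumP (P : Gam -> Prop) x : gsum Rg P x <-> forall c, ~ P c -> gpi c x = 0.
Proof.
split.
  move=> [s [y [Hy ->]]] c nPc; rewrite pi_sum big_seq; apply: big1 => g gs.
  case: (Hy g gs) => Pg Rgy; rewrite (pi_hom c Rgy); case: eqP => // cg.
  by subst; exfalso; apply: nPc.
move=> H; case: (pi_expand x) => s [_ xs].
exists [seq g <- s | gpi g x != 0], (fun g => gpi g x); split.
  move=> g; rewrite mem_filter => /andP [nz _]; split; last exact: pi_in.
  apply: NNPP => nP; by move: nz; rewrite (H g nP) eqxx.
rewrite big_filter big_mkcond [LHS]xs; apply: eq_bigr => g _.
by case: eqP.
Qed.

Lemma RgP e x : Rg e x <-> forall c, c <> e -> gpi c x = 0.
Proof.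
split; first by move=> h c ce; rewrite (pi_hom c h); case: eqP.
move=> H; have -> : x = gpi e x; last exact: pi_in.
apply/eqP; rewrite -subr_eq0; apply/eqP; apply: pi_eq0 => c.
rewrite piB (pi_hom c (pi_in e x)); case: eqP => [->|/H ->]; by rewrite subrr // subr0.
Qed.

Lemma deg_uniq {a b x} : x <> 0 -> Rg a x -> Rg b x -> a = b.
Proof.
move=> nx ha hb; have := pi_hom a hb; rewrite (pi_hom a ha) eqxx.
by case: eqP => // _ /esym.
Qed.

Lemma pi_supp c x : gpi c x <> 0 -> exists y, y <> 0 /\ Rg c y.
Proof. by move=> h; exists (gpi c x); split => //; apply: pi_in. Qed.

Lemma pi_self {c x} : Rg c x -> gpi c x = x.
Proof. by move=> h; rewrite (pi_hom c h) eqxx. Qed.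

Lemma pi_mulhom {e z} c x : Rg e z -> gpi c (x * z) = gpi (c - e) x * z.
Proof.
move=> hz; case: (pi_expand x) => s [_ xs].
rewrite [in LHS]xs [in RHS]xs mulr_suml !pi_sum mulr_suml.
apply: eq_bigr => g _.
rewrite (pi_hom c (RgM (pi_in g x) hz)) (pi_hom (c - e) (pi_in g x)) subr_eq.
by case: eqP => _ //; rewrite mul0r.
Qed.

End Grading.

Set Implicit Arguments.


Section MuLemmas.
Variable R : comNzRingType.
Hypothesis H01 : (0 : R) <> 1.

Lemma mu_neq0 (z : R) : mu z -> z <> 0.
Proof. by move=> [n [n0 zn]] z0; apply: H01; rewrite -zn z0 expr0n; case: n n0 {zn}. Qed.

Lemma mu_inv (z : R) : mu z -> exists w, z * w = 1.
Proof. by move=> [n [n0 zn]]; exists (z ^+ n.-1); rewrite -exprS prednK. Qed.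

Lemma mu_mul (z w : R) : mu z -> mu w -> mu (z * w).
Proof.
move=> [n [n0 zn]] [m [m0 wm]]; exists (n * m)%N; split; first by rewrite muln_gt0 n0.
by rewrite exprMn exprM zn expr1n mulnC exprM wm expr1n mulr1.
Qed.

Lemma mu1 : mu (1 : R). Proof. by exists 1%N; rewrite expr1. Qed.

Lemma inv_uniq (a b c : R) : a * c = 1 -> b * c = 1 -> a = b.
Proof. by move=> ac bc; rewrite -[a]mulr1 -bc mulrA (mulrC a) -mulrA ac mulr1. Qed.

Lemma unit_cancel (x z w : R) : x * z = 0 -> z * w = 1 -> x = 0.
Proof. by move=> xz zw; rewrite -[x]mulr1 -zw mulrA xz mul0r. Qed.

Section Hom.
Variables (Gam : zmodType) (f : Gam -> R).
Hypothesis Hf : hom_mu f.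

Lemma hfD a b : f (a + b) = f a * f b. Proof. by case: Hf. Qed.
Lemma hfmu a : mu (f a). Proof. by case: Hf. Qed.
Lemma hf0 : f 0 = 1.
Proof.
case: (mu_inv (hfmu 0)) => w hw.
by rewrite -hw -{2}[0]addr0 hfD -mulrA hw mulr1.
Qed.
Lemma hfN c : f c * f (- c) = 1. Proof. by rewrite -hfD subrr hf0. Qed.
End Hom.

Lemma hom_eq (Gam : zmodType) (f g : Gam -> R) a b : hom_mu f -> hom_mu g ->
  f a = g a -> f b = g b -> f (a - b) = g (a - b).
Proof.
move=> hf hg ea eb; rewrite !(hfD hf, hfD hg) ea; congr (_ * _).
apply: (@inv_uniq _ _ (g b)); first by rewrite -eb mulrC hfN.
by rewrite mulrC hfN.
Qed.

End MuLemmas.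

Section Additive.
Variables (D E : zmodType) (f : D -> E).
Hypothesis Hf : additive_map f.
Lemma am0 : f 0 = 0.
Proof. by apply: (@addrI _ (f 0)); rewrite -Hf !addr0. Qed.
Lemma amN a : f (- a) = - f a.
Proof. by apply/eqP; rewrite -addr_eq0 -Hf addNr am0. Qed.
Lemma amB a b : f (a - b) = f a - f b.
Proof. by rewrite Hf amN. Qed.
End Additive.

Section Span.
Variables (Gam : zmodType).

Definition spanP (P : Gam -> Prop) (c : Gam) : Prop :=
  exists r : seq (Gam * int), (forall p, p \in r -> P p.1) /\ c = \sum_(p <- r) p.1 *~ p.2.

Lemma span0 P : spanP P 0.
Proof. by exists [::]; rewrite big_nil. Qed.

Lemma spanB P a b : spanP P a -> spanP P b -> spanP P (a - b).
Proof.
move=> [r1 [h1 ->]] [r2 [h2 ->]].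
exists (r1 ++ map (fun p => (p.1, - p.2)) r2); split.
  move=> p; rewrite mem_cat => /orP [/h1 //|/mapP [q /h2 hq ->]] //.
rewrite big_cat big_map /= -sumrN; congr (_ + _); apply: eq_bigr => p _.
by rewrite mulrNz.
Qed.

Lemma span_gen (P : Gam -> Prop) g : P g -> spanP P g.
Proof. by move=> h; exists [:: (g, 1%Z)]; rewrite big_seq1; split => // p; rewrite inE => /eqP ->. Qed.

Lemma span_ind (P Q : Gam -> Prop) :
  Q 0 -> (forall a b, Q a -> Q b -> Q (a - b)) -> (forall g, P g -> Q g) ->
  forall c, spanP P c -> Q c.
Proof.
move=> Q0 QB QP c [r [hr ->]].
have QN a : Q a -> Q (- a) by move=> h; rewrite -sub0r; apply: (QB).
have QD a b : Q a -> Q b -> Q (a + b) by move=> ha hb; rewrite -[b]opprK; apply: (QB) => //; apply: (QN).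
elim: r hr => [|p r IH] hr; first by rewrite big_nil.
rewrite big_cons; apply: (QD); last by apply: IH => q qr; apply: hr; rewrite inE qr orbT.
have Qp : Q p.1 by apply: (QP); apply: hr; rewrite inE eqxx.
move: (p.1) (p.2) Qp => g k Qg.
have QZ : forall n : nat, Q (g *~ Posz n).
  elim=> [|n IHn]; first by rewrite mulr0z.
  by rewrite -addn1 PoszD mulrzDr mulr1z; apply: (QD).
case: k => n; first exact: QZ.
suff : Q (- (g *~ Posz n.+1)) by [].
by apply: (QN).
Qed.

Lemma spanD P a b : spanP P a -> spanP P b -> spanP P (a + b).
Proof.
move=> ha hb; rewrite -[b]opprK; apply: spanB => //.
by rewrite -sub0r; apply: spanB => //; apply: span0.
Qed.

End Span.

Section GammaAconv.
Variables (R : comNzRingType) (Gam : zmodType) (Rg : Gam -> R -> Prop) (A : R -> Prop).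

Definition Agen (g : Gam) := exists x, x <> 0 /\ Rg g x /\ A x.

Lemma GammaA_of_span c : spanP Agen c -> GammaA Rg A c.
Proof.
move=> [r [hr ->]].
exists (undup (map fst r)), (fun g => \sum_(p <- r | p.1 == g) p.2); split.
  move=> g; rewrite mem_undup => /mapP [p pr ->]; exact: hr.
rewrite -(part_undup r fst (fun p => p.1 *~ p.2)); apply: eq_bigr => g _.
rewrite mulrz_sumr; apply: eq_bigr => p /eqP -> //.
Qed.

Lemma span_of_GammaA c : GammaA Rg A c -> spanP Agen c.
Proof.
move=> [s [k [hs ->]]]; exists (map (fun g => (g, k g)) s); split.
  by move=> p /mapP [g gs ->]; apply: hs.
by rewrite big_map.
Qed.
End GammaAconv.


Section Deg.
Variables (R : comNzRingType) (Gam : zmodType) (Rg : Gam -> R -> Prop) (d : R -> Gam).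
Hypotheses (Hg : grading Rg) (H01 : (0 : R) <> 1) (Hd : forall z, mu z -> Rg (d z) z).

Lemma dM z w : mu z -> mu w -> d (z * w) = d z + d w.
Proof.
move=> mz mw; have mzw := mu_mul mz mw.
exact: (deg_uniq Hg (mu_neq0 H01 mzw) (Hd mzw) (RgM Hg (Hd mz) (Hd mw))).
Qed.

Lemma d1 : d 1 = 0.
Proof.
have := dM (@mu1 R) (@mu1 R); rewrite mulr1 => h.
by apply: (@addrI _ (d 1)); rewrite addr0 -h.
Qed.

Lemma Aof_P f y : Aof Rg f y <-> forall c, f c <> 1 -> gpi Hg c y = 0.
Proof. exact: gsumP. Qed.

Lemma Aof_sum f (I : Type) (r : seq I) (P : pred I) (F : I -> R) :
  (forall i, P i -> Aof Rg f (F i)) -> Aof Rg f (\sum_(i <- r | P i) F i).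
Proof.
move=> H; apply/Aof_P => c fc; rewrite pi_sum; apply: big1 => i Pi.
by move/Aof_P: (H i Pi); apply.
Qed.

Lemma Aof_hom f del y : Rg del y -> f del = 1 -> Aof Rg f y.
Proof.
move=> h fd; apply/Aof_P => c fc; rewrite (pi_hom Hg c h); case: eqP => // cd.
by subst.
Qed.

Lemma Aof_deg f del y : Aof Rg f y -> y <> 0 -> Rg del y -> f del = 1.
Proof.
move=> /Aof_P H ny h; apply: NNPP => nf; apply: ny.
by rewrite -(pi_self Hg h); apply: H.
Qed.

Section WithF.
Variable f : Gam -> R.
Hypothesis Hf : Id0 d f.
Let hf : hom_mu f := proj1 Hf.

Lemma fdf c : f (d (f c)) = f c. Proof. by case: Hf. Qed.
Lemma fd1 : f (d 1) = 1. Proof. by have := fdf 0; rewrite (hf0 hf). Qed.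

Lemma shift x g : Rg g x -> Rg (g + d (f (- g))) (x * f (- g)) /\ f (g + d (f (- g))) = 1.
Proof.
move=> h; split; first exact: (RgM Hg h (Hd (hfmu hf _))).
by rewrite (hfD hf) fdf hfN.
Qed.

Lemma Aof_shift x g : Rg g x -> Aof Rg f (x * f (- g)).
Proof. by move=> /shift [h1 h2]; apply: Aof_hom h1 h2. Qed.

Lemma shift_back x g : x * f (- g) * f g = x.
Proof. by rewrite -mulrA (mulrC (f (- g))) (hfN hf) mulr1. Qed.

Lemma Gof_fd z : Gof f z -> f (d z) = z.
Proof. by move=> [c <-]; apply: fdf. Qed.

Lemma Gof_mu z : Gof f z -> mu z.
Proof. by move=> [c <-]; apply: hfmu. Qed.

Lemma part1 : inD (Aof Rg f) (Gof f).
Proof.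
split.
- split; first exact: (Aof_hom (Hd (@mu1 R)) fd1).
  split.
    move=> x y /Aof_P hx /Aof_P hy; apply/Aof_P => c fc.
    by rewrite (piB Hg) hx // hy // subr0.
  move=> x y /Aof_P hx /Aof_P hy; apply/Aof_P => c fc.
  case: (pi_expand Hg x) => s [_ xs]; case: (pi_expand Hg y) => t [_ yt].
  rewrite {1}xs {1}yt mulr_suml pi_sum; apply: big1 => a _.
  rewrite mulr_sumr pi_sum; apply: big1 => b _.
  rewrite (pi_hom Hg c (RgM Hg (pi_in Hg a x) (pi_in Hg b y))).
  case: eqP => // cab.
  case: (classic (f a = 1)) => fa.
    rewrite (hy b) ?mulr0 // => fb; apply: fc; by rewrite cab (hfD hf) fa fb mulr1.
  by rewrite (hx a fa) mul0r.
- split; first by exists 0; apply: hf0.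
  split; first by move=> x y [a <-] [b <-]; exists (a + b); rewrite (hfD hf).
  by move=> x [a <-]; exists (f (- a)); split; [exists (- a) | apply: hfN].
- move=> x; case: (pi_expand Hg x) => s [_ xs].
  exists (undup (map f s)), (fun z => \sum_(c <- s | f c == z) gpi Hg c x * f (- c)).
  split.
    move=> z; rewrite mem_undup => /mapP [c cs ->]; split; first by exists c.
    by apply: Aof_sum => i _; apply: Aof_shift; apply: pi_in.
  rewrite [LHS]xs -(part_undup s f (fun c => gpi Hg c x)); apply: eq_bigr => z _.
  rewrite mulr_suml; apply: eq_bigr => c /eqP <-; by rewrite shift_back.
- move=> s a us Hs S0 z0 z0s.
  case: (Hs z0 z0s) => [[c0 fc0]] Az0.
  apply: (pi_eq0 Hg) => c.
  case: (classic (f c = 1)) => fc; last by move/Aof_P: Az0; apply.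
  have E := congr1 (gpi Hg (c + d z0)) S0.
  rewrite pi_sum (pi0 Hg) (bigD1_seq z0) //= big1_seq ?addr0 in E; last first.
    move=> z /andP [nz zs]; case: (Hs z zs) => Gz Az.
    rewrite (pi_mulhom Hg _ _ (Hd (Gof_mu Gz))).
    move/Aof_P: Az => ->; first by rewrite mul0r.
    rewrite (hfD hf) (hfD hf) (Gof_fd (ex_intro _ c0 fc0)) fc mul1r => E1.
    move/eqP: nz; apply; apply: (@inv_uniq _ _ _ (f (- d z))) => //.
    by rewrite -{1}(Gof_fd Gz) hfN.
  rewrite (pi_mulhom Hg _ _ (Hd (Gof_mu (ex_intro _ c0 fc0)))) addrK in E.
  by apply: (unit_cancel E); rewrite -fc0; apply: hfN.
Qed.

End WithF.
End Deg.

Section Aut.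
Variables (R : comNzRingType) (Gam : zmodType) (Rg : Gam -> R -> Prop).

Lemma part5 (sigma : {rmorphism R -> R}) (sG sGi : Gam -> Gam) (f : Gam -> R) :
  bijective sigma -> additive_map sG -> cancel sG sGi -> cancel sGi sG ->
  (forall c x, Rg c x <-> Rg (sG c) (sigma x)) ->
  same_set (Aof Rg (fun c => sigma (f (sGi c))))
           (fun x => exists y, Aof Rg f y /\ x = sigma y) /\
  same_set (Gof (fun c => sigma (f (sGi c))))
           (fun x => exists y, Gof f y /\ x = sigma y).
Proof.
move=> [tau st ts] _ sK sKi HR; split => x; split.
- move=> [s [y [Hy ->]]].
  exists (\sum_(g <- map sGi s) tau (y (sG g))); split.
    exists (map sGi s), (fun g => tau (y (sG g))); split => //.
    move=> g /mapP [h hs ->]; rewrite sKi; case: (Hy h hs) => e1 e2; split.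
      by apply: (can_inj st); rewrite rmorph1.
    by apply: (proj2 (HR _ _)); rewrite sKi ts.
  by rewrite rmorph_sum big_map; apply: eq_bigr => g _; rewrite sKi ts.
- move=> [y [[s [z [Hz ->]]] ->]].
  exists (map sG s), (fun g => sigma (z (sGi g))); split.
    move=> g /mapP [h hs ->]; rewrite sK; case: (Hz h hs) => e1 e2; split.
      by rewrite e1 rmorph1.
    exact: (proj1 (HR h (z h)) e2).
  by rewrite rmorph_sum big_map; apply: eq_bigr => g _; rewrite sK.
- by move=> [c <-]; exists (f (sGi c)); split => //; exists (sGi c).
- by move=> [y [[c <-] ->]]; exists (sG c); rewrite sK.
Qed.
End Aut.


Section Quot.
Variables (G : zmodType) (H : G -> Prop).
Hypotheses (H0 : H 0) (HB : forall a b, H a -> H b -> H (a - b)).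

Let HN a : H a -> H (- a). Proof. by move=> h; rewrite -sub0r; apply: HB. Qed.
Let HD a b : H a -> H b -> H (a + b).
Proof. by move=> ha hb; rewrite -[b]opprK; apply: HB => //; apply: HN. Qed.

Definition rep (a : G) : G := epsilon (inhabits 0) (fun r => H (r - a)).

Lemma rep_spec a : H (rep a - a).
Proof. by apply: (epsilon_spec (inhabits 0) (fun r => H (r - a))); exists a; rewrite subrr. Qed.

Lemma rep_eq a b : H (a - b) -> rep a = rep b.
Proof.
move=> hab; rewrite /rep; congr epsilon; apply: functional_extensionality => r.
apply: propositional_extensionality; split => h.
  by have := HD h hab; rewrite addrA subrK.
by have := HB h hab; rewrite opprB addrA subrK.
Qed.

Lemma rep_idem a : rep (rep a) = rep a.
Proof. exact/rep_eq/rep_spec. Qed.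

Lemma rep_inj a b : rep a = rep b -> H (a - b).
Proof.
move=> e; suff -> : a - b = (rep b - b) - (rep a - a) by apply: HB; apply: rep_spec.
by rewrite e (opprB (rep b)) [RHS]addrC [RHS]addrA subrK.
Qed.

Definition Q of H 0 & (forall a b, H a -> H b -> H (a - b)) := {x : G | rep x == x}.
Local Notation QT := (Q H0 HB).
HB.instance Definition _ := Choice.on QT.

Definition mk (a : G) : QT := exist _ (rep a) (introT eqP (rep_idem a)).
Definition qadd (x y : QT) : QT := mk (val x + val y).
Definition qopp (x : QT) : QT := mk (- val x).
Definition qzero : QT := mk 0.

Lemma mk_val x : mk (val x) = x.
Proof. by apply: val_inj => /=; apply/eqP; case: x. Qed.

Lemma mk_eq a b : H (a - b) -> mk a = mk b.
Proof. by move=> h; apply: val_inj => /=; apply: rep_eq. Qed.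

Lemma mk_add a b : qadd (mk a) (mk b) = mk (a + b).
Proof.
apply: mk_eq => /=; have := HD (rep_spec a) (rep_spec b).
by rewrite opprD addrACA.
Qed.

Lemma mk_opp a : qopp (mk a) = mk (- a).
Proof. apply: mk_eq => /=; rewrite opprK addrC; have := HN (rep_spec a); by rewrite opprB. Qed.

Lemma qaddA : associative qadd.
Proof.
move=> x y z; rewrite -[x]mk_val -[y]mk_val -[z]mk_val.
by rewrite !mk_add addrA.
Qed.
Lemma qaddC : commutative qadd.
Proof. by move=> x y; rewrite /qadd addrC. Qed.
Lemma qadd0 : left_id qzero qadd.
Proof. by move=> x; rewrite -[x]mk_val /qzero mk_add add0r. Qed.
Lemma qaddN : left_inverse qzero qopp qadd.
Proof. by move=> x; rewrite -[x]mk_val mk_opp mk_add addNr. Qed.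

HB.instance Definition _ := GRing.isZmodule.Build QT qaddA qaddC qadd0 qaddN.

Lemma mk_additive : additive_map (mk : G -> QT).
Proof. by move=> a b; rewrite -mk_add. Qed.

Lemma mk_eq0 a : mk a = 0 -> H a.
Proof.
move=> e; have : rep a = rep 0 by move: e => /(congr1 val).
by move/rep_inj; rewrite subr0.
Qed.
End Quot.


Section Gen.
Variables (R : comNzRingType) (Gam : zmodType) (Rg : Gam -> R -> Prop).

Definition triv (E : zmodType) (q : E) (x : R) : Prop := q = 0 \/ x = 0.

Lemma triv_grading (E : zmodType) : grading (@triv E).
Proof.
split.
- by move=> g; right.
- by move=> g x y [->|->] [h|->]; [left|left|left|right; rewrite subr0] => //; rewrite h.
- move=> g h x y [->|->] [->|->].
  + by left; rewrite addr0.
  + by right; rewrite mulr0.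
  + by right; rewrite mul0r.
  + by right; rewrite mul0r.
- move=> x; exists [:: 0], (fun _ => x); split; last by rewrite big_seq1.
  by move=> g; rewrite inE => /eqP ->; split => //; left.
- move=> s y us Hy S0 g gs; case: (Hy g gs) => [g0|//].
  subst g; move: S0; rewrite (bigD1_seq 0) //= big1_seq ?addr0 // => h /andP [nh hs].
  by case: (Hy h hs) => // h0; rewrite h0 eqxx in nh.
Qed.

Definition supp (g : Gam) := exists x, x <> 0 /\ Rg g x.

Hypothesis Hg : grading Rg.

Lemma push_triv (E : zmodType) (f : Gam -> E) :
  (forall c, supp c -> f c = 0) -> is_pushforward Rg f (@triv E).
Proof.
move=> Hf e x; rewrite (gsumP Hg); split.
  move=> [->|->] c fc; last exact: pi0.
  apply: NNPP => /(pi_supp Hg) /Hf; exact: fc.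
move=> H; case: (classic (e = 0)) => [e0|ne]; [by left|right].
apply: (pi_eq0 Hg) => c; apply: NNPP => nz; apply: (nz); apply: H => fc.
by apply: ne; rewrite -fc; apply: Hf; exact: (pi_supp Hg _ _ nz).
Qed.

Lemma gen_supp : universal_grading Rg -> forall c, spanP supp c.
Proof.
move=> [_ HU] c.
have HB : forall a b, spanP supp a -> spanP supp b -> spanP supp (a - b) by move=> a b; apply: spanB.
set Qt := Q (span0 supp) HB.
case: (HU Qt (@triv Qt) (triv_grading Qt)) => F [_ _ Huniq].
have h1 := Huniq (fun _ => 0) (fun a b => esym (addr0 0)) (push_triv (fun c _ => erefl)).
have h2 := Huniq (@mk _ _ (span0 supp) HB) (@mk_additive _ _ (span0 supp) HB) (push_triv _).
apply: (@mk_eq0 _ _ (span0 supp) HB); rewrite h2; first by rewrite -h1.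
move=> g sg; apply: mk_eq => //; rewrite subr0; exact: span_gen.
Qed.
End Gen.


Section P23.
Variables (R : comNzRingType) (Gam : zmodType) (Rg : Gam -> R -> Prop) (d : R -> Gam).
Hypotheses (Hg : grading Rg) (H01 : (0 : R) <> 1) (Hd : forall z, mu z -> Rg (d z) z).
Hypothesis Hsupp : forall c, spanP (supp Rg) c.

Lemma hom_comp (f g : Gam -> R) : hom_mu f -> hom_mu g -> hom_mu (fun c => f (d (g c))).
Proof.
move=> hf hg; split; last by move=> a; apply: hfmu.
by move=> a b; rewrite (hfD hg) (dM Hg H01 Hd (hfmu hg a) (hfmu hg b)) (hfD hf).
Qed.

Lemma part2 (f g : Gam -> R) : Id0 d f -> Id0 d g ->
  same_set (Aof Rg f) (Aof Rg g) -> same_set (Gof f) (Gof g) -> forall c, f c = g c.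
Proof.
move=> Hf Hg' SA SG c.
have hf := proj1 Hf; have hg := proj1 Hg'.
apply: (span_ind (P := supp Rg) (Q := fun c => f c = g c) _ _ _ (Hsupp c)).
- by rewrite (hf0 hf) (hf0 hg).
- by move=> a b; apply: hom_eq.
move=> ga [x [nx Rx]]; apply: NNPP => ne.
have A1 : Aof Rg f (x * f (- ga)) := Aof_shift Hg Hd Hf Rx.
have A2 : Aof Rg f (x * g (- ga)) by apply/SA; exact: (Aof_shift Hg Hd Hg' Rx).
have [_ _ _ inj] := part1 Hg Hd Hf.
have := inj [:: f ga; g ga] (fun r => if r == f ga then x * f (- ga) else - (x * g (- ga))).
move=> /(_ _ _ _ (f ga)); rewrite eqxx inE eqxx => /(_ _ _ _ isT) h.
apply: nx; rewrite -(shift_back Hf x ga) h ?mul0r //.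
- by rewrite /= inE andbT; apply/eqP.
- move=> r; rewrite !inE => /orP [/eqP ->|/eqP ->]; first by rewrite eqxx; split => //; exists ga.
  have -> : (g ga == f ga) = false by apply/eqP => e; apply: ne.
  split; first by apply/SG; exists ga.
  by move/(Aof_P Hg): A2 => A2; apply/(Aof_P Hg) => c' fc'; rewrite (piN Hg) A2 // oppr0.
- rewrite big_cons big_seq1 eqxx.
  have -> : (g ga == f ga) = false by apply/eqP => e; apply: ne.
  by rewrite mulNr (shift_back Hf) (shift_back Hg') subrr.
Qed.

Lemma part3 (f g : Gam -> R) : Id0 d f -> Id0 d g ->
  (leId0 d f g <-> leD (Aof Rg f) (Gof f) (Aof Rg g) (Gof g)).
Proof.
move=> Hf Hg'; have hf := proj1 Hf; have hg := proj1 Hg'.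
split.
  move=> H; split.
    by move=> x [c <-]; exists (d (f c)); exact: (proj2 (H c)).
  move=> x [s [y [Hy ->]]]; exists s, y; split => // c cs; case: (Hy c cs) => gc Rc.
  by split => //; case: (H c) => <- _; rewrite gc (fd1 Hf).
move=> [HG HA] c; split; last first.
  by case: (HG (f c) (ex_intro _ c erefl)) => c' <-; apply: (fdf Hg').
apply: (span_ind (P := supp Rg) (Q := fun c => f (d (g c)) = f c) _ _ _ (Hsupp c)).
- by rewrite (hf0 hg) (fd1 Hf) (hf0 hf).
- by move=> a b; apply: (hom_eq (f := fun c => f (d (g c))) (g := f)) => //; apply: hom_comp.
move=> ga [x [nx Rx]].
have [R2 _] := shift Hg Hd Hg' Rx.
have A2 : Aof Rg f (x * g (- ga)) by apply: HA; exact: (Aof_shift Hg Hd Hg' Rx).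
have nz : x * g (- ga) <> 0.
  by move=> e; apply: nx; rewrite -(shift_back Hg' x ga) e mul0r.
have := Aof_deg Hg A2 nz R2; rewrite (hfD hf) => e1.
apply: (@inv_uniq _ _ _ (f (d (g (- ga))))) => //.
by rewrite -(hfD hf) -(dM Hg H01 Hd (hfmu hg _) (hfmu hg _)) (hfN hg) (fd1 Hf).
Qed.
End P23.


Section AddB.
Variables (V W : zmodType) (phi : V -> W).
Hypothesis Hphi : forall a b, phi (a - b) = phi a - phi b.
Lemma phi0 : phi 0 = 0. Proof. by rewrite -(subrr 0) Hphi subrr. Qed.
Lemma phiN a : phi (- a) = - phi a. Proof. by rewrite -sub0r Hphi phi0 sub0r. Qed.
Lemma phiD a b : phi (a + b) = phi a + phi b.
Proof. by rewrite -{1}[b]opprK Hphi phiN opprK. Qed.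
Lemma phi_sum (I : Type) (r : seq I) (P : pred I) (F : I -> V) :
  phi (\sum_(i <- r | P i) F i) = \sum_(i <- r | P i) phi (F i).
Proof. by apply: big_morph; [exact: phiD| exact: phi0]. Qed.
Lemma phin v k : phi (v *+ k) = phi v *+ k.
Proof. by elim: k => [|k IH]; rewrite ?mulr0n ?phi0 // !mulrS phiD IH. Qed.
Lemma phiz v m : phi (v *~ m) = phi v *~ m.
Proof.
case: m => k; first by rewrite -!pmulrn phin.
by rewrite NegzE !mulrNz phiN -!pmulrn phin.
Qed.
End AddB.

Lemma rv_mulz n (v : 'rV[int]_n) (m : int) k : (v *~ m) 0 k = m * v 0 k.
Proof. by rewrite -scaler_int intz mxE. Qed.

Lemma intrMq (a b : int) : (a * b)%:~R = a%:~R * b%:~R :> rat.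
Proof. exact: intrM. Qed.

Section Order.
Variable R : comNzRingType.
Hypothesis Ho : is_order R.

Lemma ord_tf (x : R) (m : int) : x *~ m = 0 -> x = 0 \/ m = 0.
Proof.
case: Ho => n [phi [Hphi [psi phiK psiK]]] h.
case: (eqVneq m 0) => [->|mn]; [by right|left].
have e : psi x *~ m = 0.
  apply: (can_inj phiK); rewrite phiz // psiK h (phi0 Hphi) //.
rewrite -[x]psiK; have -> : psi x = 0; last exact: phi0.
apply/rowP => k; rewrite mxE; apply/eqP.
have := congr1 (fun A : 'rV[int]_n => A 0 k) e; rewrite /= rv_mulz mxE => /eqP.
by rewrite mulf_eq0 (negbTE mn).
Qed.

Lemma ord_dep : exists N : nat, forall x : 'I_N.+1 -> R,
  exists m : 'I_N.+1 -> int, (exists j, m j <> 0) /\ \sum_j x j *~ m j = 0.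
Proof.
case: Ho => n [phi [Hphi [psi phiK psiK]]]; exists n => x.
pose v j := psi (x j).
pose M : 'M[rat]_(n.+1, n) := \matrix_(j, k) ((v j) 0 k)%:~R.
have nfree : ~~ row_free M.
  rewrite /row_free; apply/negP => /eqP e; have := rank_leq_col M.
  by rewrite e ltnn.
have [i ui] : exists i, row i (kermx M) != 0.
  apply: NNPP => H; move: nfree; rewrite -kermx_eq0; apply/negP; rewrite negbK.
  apply/eqP/row_matrixP => i; rewrite row0; apply/eqP; apply: NNPP => h; apply: H.
  by exists i; apply/negP.
set u := row i (kermx M).
have uM : u *m M = 0 by rewrite /u -row_mul mulmx_ker row0.
pose D := \prod_k denq (u 0 k).
pose m j := numq (u 0 j) * \prod_(k | k != j) denq (u 0 k).
have mE j : (m j)%:~R = u 0 j * D%:~R.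
  transitivity ((numq (u 0 j))%:~R * (\prod_(k | k != j) denq (u 0 k))%:~R : rat).
    exact: intrM.
  rewrite numqE -mulrA; congr (_ * _).
  rewrite /D [in RHS](bigD1 j) //=; symmetry; exact: intrM.
exists m; split.
  have [j uj] : exists j, u 0 j != 0.
    apply: NNPP => H; move: ui; rewrite -/u; apply/negP; rewrite negbK.
    apply/eqP/rowP => j; apply/eqP; apply: NNPP => h; apply: H.
    by exists j; move: h; rewrite [X in _ == X]mxE => h; apply/negP.
  exists j; apply/eqP; rewrite /m mulf_neq0 ?numq_eq0 //.
  by rewrite prodf_seq_neq0; apply/allP => k _; apply/implyP => _; apply: denq_neq0.
have S0 : \sum_j v j *~ m j = 0.
  apply/rowP => k; rewrite summxE mxE.
  apply/eqP; rewrite -(intr_eq0 rat) rmorph_sum /=.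
  have := congr1 (fun A : 'rV[rat]_n => A 0 k) uM; rewrite /= mxE mxE.
  move=> e; apply/eqP.
  transitivity (D%:~R * \sum_j u 0 j * M j k); last by rewrite e mulr0.
  rewrite mulr_sumr; apply: eq_bigr => j _.
  by rewrite rv_mulz intrMq mE [M j k]mxE -mulrA mulrCA.
transitivity (phi (\sum_j v j *~ m j)); last by rewrite S0 (phi0 Hphi).
rewrite (phi_sum Hphi); apply: eq_bigr => j _.
by rewrite (phiz Hphi) psiK.
Qed.
End Order.


Lemma zclosed_mulz (V : zmodType) (Q : V -> Prop) x (m : int) :
  Q 0 -> (forall a b, Q a -> Q b -> Q (a - b)) -> Q x -> Q (x *~ m).
Proof.
move=> Q0 QB Qx.
have QN a : Q a -> Q (- a) by move=> h; rewrite -sub0r; apply: (QB).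
have QD a b : Q a -> Q b -> Q (a + b) by move=> ha hb; rewrite -[b]opprK; apply: (QB) => //; apply: (QN).
have QZ : forall n : nat, Q (x *~ Posz n).
  elim=> [|n IHn]; first by rewrite mulr0z.
  by rewrite -addn1 PoszD mulrzDr mulr1z; apply: (QD).
case: m => n; first exact: QZ.
suff : Q (- (x *~ Posz n.+1)) by [].
by apply: (QN).
Qed.

Section GType.
Variables (R : comNzRingType) (Gp : R -> Prop).
Hypotheses (G1 : Gp 1) (GM : forall x y, Gp x -> Gp y -> Gp (x * y))
  (GI : forall x, Gp x -> exists y, Gp y /\ x * y = 1).

Definition gb (x : R) : bool := if excluded_middle_informative (Gp x) then true else false.
Lemma gbP x : gb x = true <-> Gp x.
Proof. by rewrite /gb; case: excluded_middle_informative. Qed.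

Definition GT of Gp 1 & (forall x y, Gp x -> Gp y -> Gp (x * y)) &
  (forall x, Gp x -> exists y, Gp y /\ x * y = 1) := {x : R | gb x}.
Local Notation GTT := (GT G1 GM GI).
HB.instance Definition _ := Choice.on GTT.

Definition mkg (x : R) (h : Gp x) : GTT := exist _ x (proj2 (gbP x) h).
Lemma gvalP (q : GTT) : Gp (val q).
Proof. by apply/gbP; case: q. Qed.

Definition ginvr (r : R) : R := epsilon (inhabits 0) (fun y => Gp y /\ r * y = 1).
Lemma ginvr_spec r : Gp r -> Gp (ginvr r) /\ r * ginvr r = 1.
Proof. by move=> h; apply: (epsilon_spec (inhabits 0) (fun y => Gp y /\ r * y = 1)); apply: GI. Qed.

Definition gone : GTT := mkg G1.
Definition gmul (a b : GTT) : GTT := mkg (GM (gvalP a) (gvalP b)).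
Definition ginv (a : GTT) : GTT := mkg (proj1 (ginvr_spec (gvalP a))).

Lemma gmulA : associative gmul.
Proof. by move=> a b c; apply: val_inj; rewrite /= mulrA. Qed.
Lemma gmulC : commutative gmul.
Proof. by move=> a b; apply: val_inj; rewrite /= mulrC. Qed.
Lemma gmul1 : left_id gone gmul.
Proof. by move=> a; apply: val_inj; rewrite /= mul1r. Qed.
Lemma gmulV : left_inverse gone ginv gmul.
Proof. by move=> a; apply: val_inj; rewrite /= mulrC; case: (ginvr_spec (gvalP a)). Qed.

HB.instance Definition _ := GRing.isZmodule.Build GTT gmulA gmulC gmul1 gmulV.

Lemma gvalD (a b : GTT) : val (a + b) = val a * val b. Proof. by []. Qed.
Lemma gval0 : val (0 : GTT) = 1. Proof. by []. Qed.

Definition toG (r : R) : GTT :=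
  match excluded_middle_informative (Gp r) with left h => mkg h | right _ => 0 end.
Lemma toG_val r : Gp r -> val (toG r) = r.
Proof. by rewrite /toG; case: excluded_middle_informative. Qed.
Lemma toGK (q : GTT) : toG (val q) = q.
Proof. by apply: val_inj; rewrite toG_val //; apply: gvalP. Qed.

Variable A : R -> Prop.
Hypotheses (A1 : A 1) (AB : forall x y, A x -> A y -> A (x - y)) (AM : forall x y, A x -> A y -> A (x * y)).
Hypothesis Hsurj : forall x, exists (s : seq R) (a : R -> R),
  (forall g, g \in s -> Gp g /\ A (a g)) /\ x = \sum_(g <- s) a g * g.
Hypothesis Hinj : forall (s : seq R) (a : R -> R), uniq s ->
  (forall g, g \in s -> Gp g /\ A (a g)) ->
  \sum_(g <- s) a g * g = 0 -> forall g, g \in s -> a g = 0.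

Lemma A0 : A 0. Proof. by rewrite -(subrr 1); apply: AB. Qed.

Definition Sg (q : GTT) (x : R) : Prop := exists a, A a /\ x = a * val q.

Lemma Sg_grading : grading Sg.
Proof.
split.
- by move=> g; exists 0; split; [exact: A0| rewrite mul0r].
- by move=> g x y [a [Aa ->]] [b [Ab ->]]; exists (a - b); split; [apply: AB| rewrite mulrBl].
- move=> g h x y [a [Aa ->]] [b [Ab ->]]; exists (a * b); split; first by apply: AM.
  by rewrite gvalD mulrACA.
- move=> x; case: (Hsurj x) => s [a [Ha ->]].
  exists (map toG s), (fun q => a (val q) * val q); split.
    move=> q /mapP [r rs ->]; split => //; exists (a (val (toG r))); split => //.
    by rewrite toG_val; case: (Ha r rs).
  rewrite big_map big_seq [RHS]big_seq; apply: eq_bigr => r rs.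
  by rewrite toG_val //; case: (Ha r rs).
- move=> s y us Hy S0 q qs.
  pose c (q : GTT) := epsilon (inhabits 0) (fun a => A a /\ y q = a * val q).
  have cS q' : q' \in s -> A (c q') /\ y q' = c q' * val q'.
    by move=> h; apply: (epsilon_spec (inhabits 0) (fun a => A a /\ y q' = a * val q')); apply: Hy.
  have := Hinj (s := map val s) (a := fun r => c (toG r)).
  rewrite map_inj_uniq; last exact: val_inj.
  move=> /(_ us) H.
  have e : c (toG (val q)) = 0.
    apply: H; last by apply/mapP; exists q.
      by move=> r /mapP [q' q's ->]; rewrite toGK; split; [apply: gvalP| case: (cS q' q's)].
    rewrite big_map; transitivity (\sum_(q' <- s) y q'); last exact: S0.
    rewrite big_seq [RHS]big_seq; apply: eq_bigr => q' q's.
    by rewrite toGK; case: (cS q' q's) => _ ->.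
  by case: (cS q qs) => _ ->; rewrite -[q in c q]toGK e mul0r.
Qed.
End GType.


Lemma zswap (V : zmodType) (a b x y : V) : (a - b) - (x - y) = (a - x) - (b - y).
Proof. by rewrite !opprB !addrA addrAC (addrAC a) -!addrA (addrC y) !addrA; congr (_ + _); rewrite addrAC. Qed.

Lemma pow_mu (R : comNzRingType) (g w : R) (i j : nat) :
  g * w = 1 -> (i < j)%N -> g ^+ i = g ^+ j -> mu g.
Proof.
move=> gw ij e; exists (j - i)%N; split; first by rewrite subn_gt0.
have wi : g ^+ i * w ^+ i = 1 by rewrite -exprMn gw expr1n.
have e' : g ^+ i = g ^+ i * g ^+ (j - i) by rewrite -exprD subnKC // ltnW.
move: e'; move/(congr1 (fun t => t * w ^+ i)) => /=; rewrite mulrAC !wi mul1r.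
by move=> <-.
Qed.

Section P4.
Variables (R : comNzRingType) (Gam : zmodType) (Rg : Gam -> R -> Prop) (d : R -> Gam).
Hypotheses (Hg : grading Rg) (H01 : (0 : R) <> 1) (Hd : forall z, mu z -> Rg (d z) z).
Hypotheses (Ho : is_order R) (HU : universal_grading Rg).

Lemma mu_of_D (A Gp : R -> Prop) : inD A Gp -> forall g, Gp g -> mu g.
Proof.
move=> [[A1 [AB AM]] [G1 [GM GI]] Hsurj Hinj] g Gg.
case: (ord_dep Ho) => N HN.
have Gpow k : Gp (g ^+ k) by elim: k => [|k IH]; rewrite ?expr0 // exprS; apply: GM.
have A0 : A 0 by rewrite -(subrr 1); apply: AB.
case: (classic (injective (fun j : 'I_N.+1 => g ^+ j))) => inj.
  exfalso; case: (HN (fun j => g ^+ j)) => m [[j0 mj0] S].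
  pose s := map (fun j : 'I_N.+1 => g ^+ j) (index_enum 'I_N.+1).
  pose a r := \sum_(j < N.+1) (if r == g ^+ j then (m j)%:~R else 0 : R).
  have aE (j : 'I_N.+1) : a (g ^+ j) = (m j)%:~R.
    rewrite /a (bigD1 j) //= eqxx big1 ?addr0 // => k kj.
    by case: eqP => // /inj /eqP; rewrite eq_sym (negbTE kj).
  have := Hinj s a; rewrite map_inj_uniq // index_enum_uniq => /(_ isT).
  move=> /(_ _ _ (g ^+ j0)); rewrite aE.
  have sj : g ^+ j0 \in s by apply/mapP; exists j0 => //; rewrite mem_index_enum.
  move=> /(_ _ _ sj) h.
  have : (m j0)%:~R = 0 :> R.
    apply: h.
      move=> r /mapP [j _ ->]; split => //; rewrite aE.
      by apply: (zclosed_mulz (Q := A)).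
    rewrite big_map; transitivity (\sum_(j < N.+1) g ^+ j *~ m j); last exact: S.
    by apply: eq_bigr => j _; rewrite aE mulrzl.
  by move/(ord_tf Ho) => [e|//]; apply: H01.
have [i [j [e ne]]] : exists i j : 'I_N.+1, g ^+ i = g ^+ j /\ i <> j.
  apply: NNPP => H; apply: inj => i j e; apply: NNPP => ne; apply: H; by exists i, j.
case: (GI g Gg) => w [_ gw].
case: (ltngtP i j) => [ij|ji|ij]; first exact: pow_mu gw ij e.
  exact: pow_mu gw ji (esym e).
by exfalso; apply: ne; apply: val_inj.
Qed.

Let Hsupp := gen_supp Hg HU.

Lemma part4 (A Gp : R -> Prop) : inD A Gp ->
      [/\ (forall g, Gp g -> mu g),
          (forall g h, Gp g -> Gp h -> d (g * h) = d g + d h),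
          (forall g h, Gp g -> Gp h -> d g = d h -> g = h),
          (forall c, exists a g, GammaA Rg A a /\ Gp g /\ c = a + d g) /\
          (forall a g, GammaA Rg A a -> Gp g -> a = d g -> a = 0) &
          exists f, [/\ Id0 d f, same_set (Aof Rg f) A, same_set (Gof f) Gp &
             forall a g, GammaA Rg A a -> Gp g -> f (a + d g) = g]].
Proof.
move=> HD; have muG := mu_of_D HD.
case: HD => [[A1 [AB AM]] [G1 [GM GI]] Hsurj Hinj].
have Sgg := Sg_grading G1 GM GI A1 AB AM Hsurj Hinj.
case: HU => _ HU'; case: (HU' _ _ Sgg) => F [Fadd PF _].
pose f c := val (F c).
have fD a b : f (a + b) = f a * f b by rewrite /f Fadd.
have fG c : Gp (f c) by apply: gvalP.
have hf : hom_mu f by split => // a; apply: muG.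
have dGM g h : Gp g -> Gp h -> d (g * h) = d g + d h.
  by move=> Gg Gh; apply: (dM Hg H01 Hd); apply: muG.
have fdG g (Gg : Gp g) : f (d g) = g.
  have : Sg A (mkg G1 GM GI Gg) g by exists 1; split => //; rewrite mul1r.
  move/(PF _ _)/(gsumP Hg) => H.
  suff e : F (d g) = mkg G1 GM GI Gg by rewrite /f e.
  apply: NNPP => ne; have := H (d g) ne; rewrite (pi_self Hg (Hd (muG _ Gg))).
  exact: (mu_neq0 H01 (muG _ Gg)).
have Id0f : Id0 d f by split => // c; apply: fdG.
have F0 c : F c = 0 <-> f c = 1.
  by split => e; [rewrite /f e | apply: val_inj; exact: e].
have ker a : GammaA Rg A a -> f a = 1.
  move/span_of_GammaA => sp.
  apply: (span_ind (P := Agen Rg A) (Q := fun c => f c = 1) _ _ _ sp).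
  - exact: (hf0 hf).
  - move=> a1 b1 h1 h2; apply: (hom_eq (g := fun _ => 1)) => //.
    by split => [a2 b2|a2]; [rewrite mulr1| exact: mu1].
  move=> ga [x [nx [Rx Ax]]].
  have : Sg A (0 : GT G1 GM GI) x by exists x; split => //; rewrite gval0 mulr1.
  move/(PF _ _)/(gsumP Hg) => H; apply/F0; apply: NNPP => ne; apply: nx.
  by rewrite -(pi_self Hg Rx); apply: H.
have dfB a b : d (f (a - b)) = d (f a) - d (f b).
  have := dGM _ _ (fG (a - b)) (fG b); rewrite -fD subrK => ->; by rewrite addrK.
have df0 : d (f 0) = 0 by rewrite (hf0 hf) (d1 Hg H01 Hd).
have Hdec c : spanP (Agen Rg A) (c - d (f c)).
  apply: (span_ind (P := supp Rg) (Q := fun c => spanP (Agen Rg A) (c - d (f c))) _ _ _ (Hsupp c)).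
  - by rewrite df0 subr0; apply: span0.
  - by move=> a b ha hb; rewrite dfB zswap; apply: spanB.
  move=> ga [x [nx Rx]].
  have : gsum Rg (fun g => F g = F ga) x.
    exists [:: ga], (fun _ => x); split; last by rewrite big_seq1.
    by move=> g; rewrite inE => /eqP ->.
  move/(PF _ _) => [a [Aa xa]].
  apply: span_gen; exists a; split; first by move=> a0; apply: nx; rewrite xa a0 mul0r.
  split => //.
  have -> : a = x * f (- ga) by rewrite xa -mulrA -fD subrr (hf0 hf) mulr1.
  have e : d (f (- ga)) = - d (f ga) by have := dfB 0 ga; rewrite sub0r df0 sub0r.
  by rewrite -e; apply: (RgM Hg Rx (Hd (muG _ (fG _)))).
split => //.
- by move=> g h Gg Gh e; rewrite -(fdG g Gg) e fdG.
- split.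
    move=> c; exists (c - d (f c)), (f c); split; first exact: GammaA_of_span.
    by split => //; rewrite subrK.
  move=> a g Ga Gg e; have := ker a Ga; rewrite e fdG // => g1.
  by rewrite g1 (d1 Hg H01 Hd).
exists f; split => //.
- move=> x; split.
    move=> [s [y [Hy ex]]].
    have : gsum Rg (fun c => F c = 0) x.
      by exists s, y; split => // g gs; case: (Hy g gs) => e1 e2; split => //; apply/F0.
    by move/(PF _ _) => [a [Aa ->]]; rewrite gval0 mulr1.
  move=> Ax; have : Sg A (0 : GT G1 GM GI) x by exists x; split => //; rewrite gval0 mulr1.
  move/(PF _ _) => [s [y [Hy ex]]]; exists s, y; split => // g gs.
  by case: (Hy g gs) => e1 e2; split => //; apply/F0.
- by move=> x; split; [move=> [c <-]; apply: fG| move=> Gx; exists (d x); apply: fdG].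
- by move=> a g Ga Gg; rewrite fD (ker a Ga) mul1r fdG.
Qed.
End P4.

Unset Implicit Arguments.
Theorem theorem6p7 (R : comNzRingType) (Gam : zmodType) (Rg : Gam -> R -> Prop)
  (d : R -> Gam) :
  is_order R -> reduced R -> connected R -> universal_grading Rg ->
  (* d : mu -> Gamma is the degree map *)
  (forall z, mu z -> Rg (d z) z) ->
  [/\
   (* well defined *)
   (forall f, Id0 d f -> inD (Aof Rg f) (Gof f)),
   (* injective *)
   (forall f g, Id0 d f -> Id0 d g ->
      same_set (Aof Rg f) (Aof Rg g) -> same_set (Gof f) (Gof g) ->
      forall c, f c = g c),
   (* order isomorphism *)
   (forall f g, Id0 d f -> Id0 d g ->
      (leId0 d f g <-> leD (Aof Rg f) (Gof f) (Aof Rg g) (Gof g))),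
   (* surjective, with the explicit inverse *)
   (forall A Gp, inD A Gp ->
      [/\ (forall g, Gp g -> mu g),
          (* d restricts to an isomorphism G -> d(G) *)
          (forall g h, Gp g -> Gp h -> d (g * h) = d g + d h),
          (forall g h, Gp g -> Gp h -> d g = d h -> g = h),
          (* Gamma = Gamma_A x d(G) *)
          (forall c, exists a g, GammaA Rg A a /\ Gp g /\ c = a + d g) /\
          (forall a g, GammaA Rg A a -> Gp g -> a = d g -> a = 0) &
          exists f, [/\ Id0 d f, same_set (Aof Rg f) A, same_set (Gof f) Gp &
             forall a g, GammaA Rg A a -> Gp g -> f (a + d g) = g]]) &
   (* respects the actions of Aut(R) *)
   (forall (sigma : {rmorphism R -> R}) (sG sGi : Gam -> Gam),
      bijective sigma ->
      additive_map sG -> cancel sG sGi -> cancel sGi sG ->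
      (forall c x, Rg c x <-> Rg (sG c) (sigma x)) ->
      forall f, Id0 d f ->
        same_set (Aof Rg (fun c => sigma (f (sGi c))))
                 (fun x => exists y, Aof Rg f y /\ x = sigma y) /\
        same_set (Gof (fun c => sigma (f (sGi c))))
                 (fun x => exists y, Gof f y /\ x = sigma y))].
Proof.
move=> Ho Hred Hconn HUg Hd.
have Hg := proj1 HUg; have H01 : (0 : R) <> 1 := proj1 Hconn.
have Hsupp := gen_supp Hg HUg.
split.
- by move=> f Hf; exact: (part1 Hg Hd Hf).
- by move=> f g Hf Hg' SA SG; exact: (part2 Hg Hd Hsupp Hf Hg' SA SG).
- by move=> f g Hf Hg'; exact: (part3 Hg H01 Hd Hsupp Hf Hg').
- by move=> A Gp HD; exact: (part4 Hg H01 Hd Ho HUg HD).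
- by move=> sigma sG sGi sb sadd sK sKi HR f Hf; exact: (part5 f sb sadd sK sKi HR).
Qed.
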